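(* Let $G$ be a simple connected graph with $n$ vertices and $m$ edges, let $k\ge1$ be an integer, and let $S_k(G)$ be the $k$-parallel subdivision graph of $G$. If $\sigma\neq 1$ is an eigenvalue of $\mathscr{L}(S_k(G))$, then $4\sigma-2\sigma^2$ is an eigenvalue of $\mathscr{L}(G)$, and its multiplicity is the same as that of $\sigma$.
   Context: For a graph $H$ with adjacency matrix $A(H)$ and diagonal degree matrix $D(H)$ (no isolated vertices), the normalized Laplacian is $\mathscr{L}(H)=I-D(H)^{-1/2}A(H)D(H)^{-1/2}$. The $k$-parallel subdivision graph $S_k(G)$ is obtained from $G$ by replacing each edge $uv$ of $G$ by $k$ internally disjoint paths $u-w-v$ of length $2$ (each with its own new middle vertex $w$). *)

(* Defs.v *)
From HB Require Import structures.
From mathcomp Require Import all_boot all_order all_algebra.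
Set Implicit Arguments. Unset Strict Implicit. Unset Printing Implicit Defensive.
Import Order.TTheory GRing.Theory Num.Theory.
Local Open Scope ring_scope.

Definition simple_graph (T : finType) (g : rel T) : Prop :=
  symmetric g /\ irreflexive g.

Definition connected_graph (T : finType) (g : rel T) : Prop :=
  forall x y : T, connect g x y.

Definition is_edge (T : finType) (g : rel T) (E : {set T}) : bool :=
  [exists x : T, exists y : T, g x y && (E == [set x; y])].

Definition edge_t (T : finType) (g : rel T) := {E : {set T} | is_edge g E}.

(* k-parallel subdivision: vertices of G plus one new vertex w_(uv,i)
   for every edge uv and every i < k, adjacent exactly to u and v. *)
Definition subdiv_vertex (T : finType) (g : rel T) (k : nat) : finType :=
  (T + (edge_t g * 'I_k))%type.

Definition subdiv_rel (T : finType) (g : rel T) (k : nat)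
  : rel (subdiv_vertex g k) :=
  fun u v => match u, v with
  | inl x, inr (E, _) => x \in val E
  | inr (E, _), inl x => x \in val E
  | _, _ => false
  end.

Definition adj_mx (R : nzRingType) (T : finType) (g : rel T) : 'M[R]_#|T| :=
  \matrix_(i, j) (g (enum_val i) (enum_val j))%:R.

Definition degree (T : finType) (g : rel T) (x : T) : nat := #|[set y | g x y]|.

Definition deg_invsqrt_mx (R : rcfType) (T : finType) (g : rel T) : 'M[R]_#|T| :=
  diag_mx (\row_i (Num.sqrt (degree g (enum_val i))%:R)^-1).

Definition norm_laplacian (R : rcfType) (T : finType) (g : rel T) : 'M[R]_#|T| :=
  1%:M - deg_invsqrt_mx R g *m adj_mx R g *m deg_invsqrt_mx R g.

Definition eig_mult (R : fieldType) (n : nat) (A : 'M[R]_n) (a : R) : nat :=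
  mup a (char_poly A).

Arguments subdiv_rel {T} g k.
Arguments subdiv_vertex {T} g k.
Arguments adj_mx R {T} g.
Arguments deg_invsqrt_mx R {T} g.
Arguments norm_laplacian R {T} g.
Arguments eig_mult {R n} A a.

(* Main.v *)
Require Import Defs.
From HB Require Import structures.
From mathcomp Require Import all_boot all_order all_algebra.
Import Order.TTheory GRing.Theory Num.Theory.
Local Open Scope ring_scope.
From mathcomp Require Import all_fingroup.
From mathcomp Require Import ring lra.
Set Implicit Arguments. Unset Strict Implicit. Unset Printing Implicit Defensive.
Import Order.TTheory GRing.Theory Num.Theory.
Local Open Scope ring_scope.


Lemma nl_entry (R : rcfType) (U : finType) (r : rel U) (i j : 'I_#|U|) :
  norm_laplacian R r i j = (i == j)%:R -
   (Num.sqrt (degree r (enum_val i))%:R)^-1 * (r (enum_val i) (enum_val j))%:R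
   * (Num.sqrt (degree r (enum_val j))%:R)^-1.
Proof.
by rewrite /norm_laplacian /deg_invsqrt_mx mul_mx_diag mul_diag_mx !mxE.
Qed.

Lemma char_poly_reindex (F : fieldType) N m (A : 'M[F]_N) (h : 'I_m -> 'I_N) :
  bijective h -> char_poly (\matrix_(i,j) A (h i) (h j)) = char_poly A.
Proof.
move=> hb; have eN : m = N by rewrite -[m]card_ord -[N]card_ord; apply: bij_eq_card hb.
subst m; have hi := bij_inj hb; set s := perm hi; rewrite /char_poly.
have -> : char_poly_mx (\matrix_(i,j) A (h i) (h j)) = row_perm s (col_perm s (char_poly_mx A)).
  apply/matrixP => i j; rewrite !mxE !permE (inj_eq hi) //.
rewrite row_permE col_permE !det_mulmx !det_perm odd_permV.
rewrite mulrCA -signr_addb addbb mulr1 //.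
Qed.

Lemma mup_comp (R : rcfType) (c : {poly R}) (s : R) : c != 0 -> s != 1 ->
  mup s (c \Po ('X *+ 4 - 'X ^+ 2 *+ 2)) = mup (4 * s - 2 * s ^+ 2) c.
Proof.
move=> c0 s1; set a := 4 * s - 2 * s ^+ 2.
have [m [q qa ->]] := multiplicity_XsubC c a.
move: qa; rewrite c0 /= => qa.
rewrite mupMr // mup_XsubCX eqxx comp_polyM.
have -> : (('X - a%:P) ^+ m) \Po ('X *+ 4 - 'X ^+ 2 *+ 2) =
   ((-2)%:P * ('X - (2 - s)%:P)) ^+ m * ('X - s%:P) ^+ m.
  rewrite rmorphXn /= comp_polyB comp_polyX comp_polyC -exprMn; congr (_ ^+ _).
  rewrite /a !(polyCB, polyCN, polyCM, rmorphXn) ?polyC_natr; ring.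
rewrite mulrA mupMr ?mup_XsubCX ?eqxx //.
rewrite rootM negb_or; apply/andP; split.
  rewrite /root horner_comp.
  have -> : ('X *+ 4 - 'X^2 *+ 2).[s] = a.
    by rewrite /a hornerD hornerN !hornerMn hornerX hornerXn; ring.
  exact: qa.
rewrite /root horner_exp expf_eq0 negb_and; apply/orP; right.
rewrite hornerM hornerC hornerXsubC mulf_eq0 negb_or; apply/andP; split.
  by rewrite oppr_eq0 pnatr_eq0.
rewrite subr_eq0; apply/negP => /eqP h; move/eqP: s1; apply; lra.
Qed.


Section Graph.
Variables (T : finType) (g : rel T) (k : nat).
Hypothesis gsym : symmetric g.
Hypothesis girr : irreflexive g.
Local Notation W := (edge_t g * 'I_k)%type.
Local Notation V := (subdiv_vertex g k).
Local Notation S := (subdiv_rel g k).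

Lemma edge_two (E : edge_t g) : exists a b, [/\ g a b, a != b & val E = [set a; b]].
Proof.
case: E => E /= /existsP [a /existsP [b /andP [gab /eqP ->]]].
exists a, b; split => //; apply/negP => /eqP eab; by rewrite eab girr in gab.
Qed.

Lemma edge_both (E : edge_t g) x y : x \in val E -> y \in val E -> x != y ->
  g x y && (val E == [set x; y]).
Proof.
have [a [b [gab nab ->]]] := edge_two E.
rewrite !inE => /orP [] /eqP -> /orP [] /eqP -> //=. all: try (rewrite eqxx /=; done).
  by rewrite gab eqxx.
by rewrite gsym gab setUC eqxx.
Qed.

Lemma pair_inj x : injective (fun y : T => [set x; y]).
Proof.
move=> y z /setP e; move: (e y) (e z); rewrite !inE !eqxx !orbT /=.
move=> /esym/orP [/eqP yx|/eqP //] /orP [/eqP zx|/eqP -> //].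
by rewrite yx zx.
Qed.

Lemma mk_edge x y : g x y -> is_edge g [set x; y].
Proof. by move=> gxy; apply/existsP; exists x; apply/existsP; exists y; rewrite gxy eqxx. Qed.

Lemma deg_inr (w : W) : degree S (inr w) = 2%N.
Proof.
case: w => E i; rewrite /degree.
have -> : [set v : V | S (inr (E, i)) v] = inl @: val E.
  apply/setP => -[z|w]; rewrite inE /=.
    by rewrite mem_imset //; move=> ?? [].
  by apply/esym/imsetP => -[?].
have [a [b [_ nab ->]]] := edge_two E.
by rewrite card_imset ?cards2 ?nab //; move=> ?? [].
Qed.

Lemma edges_at x : #|[set E : edge_t g | x \in val E]| = degree g x.
Proof.
have E1 : [set val E | E in [set E : edge_t g | x \in val E]] = [set [set x; y] | y in [set y | g x y]].
  apply/setP => X; apply/imsetP/imsetP.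
  case=> E; rewrite inE => xE ->.
  have [a [b [gab nab eE]]] := edge_two E.
  move: xE; rewrite eE !inE => /orP [] /eqP ->.
    by exists b; rewrite ?inE.
  by exists a; rewrite ?inE 1?setUC // gsym.
case=> y; rewrite inE => gxy ->.
exists (exist _ [set x; y] (mk_edge gxy)) => //.
by rewrite inE /= setU11.
rewrite -(card_imset _ val_inj) E1 card_imset //; exact: pair_inj.
Qed.

Lemma cardW_inl x : #|[set w : W | S (inl x) (inr w)]| = (k * degree g x)%N.
Proof.
have -> : [set w : W | S (inl x) (inr w)] = setX [set E : edge_t g | x \in val E] [set: 'I_k].
  by apply/setP => -[E i]; rewrite !inE andbT.
by rewrite cardsX cardsT card_ord edges_at mulnC.
Qed.

Lemma deg_inl x : degree S (inl x) = #|[set w : W | S (inl x) (inr w)]|.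
Proof.
rewrite /degree -(card_imset _ (@inr_inj T W)); apply: eq_card => -[z|w]; rewrite inE /=.
  by apply/esym/imsetP => -[?].
by rewrite mem_imset ?inE //; move=> ?? [].
Qed.

Lemma cardW_both x y : x != y ->
  #|[set w : W | S (inl x) (inr w) && S (inl y) (inr w)]| = (k * g x y)%N.
Proof.
move=> nxy.
have -> : [set w : W | S (inl x) (inr w) && S (inl y) (inr w)] =
   setX [set E : edge_t g | (x \in val E) && (y \in val E)] [set: 'I_k].
  by apply/setP => -[E i]; rewrite !inE andbT.
rewrite cardsX cardsT card_ord mulnC; congr (_ * _)%N.
case gxy: (g x y).
  rewrite /= -(cards1 (exist _ [set x; y] (mk_edge gxy) : edge_t g)).
  apply: eq_card => E; rewrite !inE; apply/idP/idP.
    case/andP => xE yE; have /andP [_ eE] := edge_both xE yE nxy.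
    by rewrite -val_eqE.
  by move/eqP ->; rewrite /= !inE !eqxx orbT.
apply/eqP; rewrite cards_eq0; apply/eqP/setP => E; rewrite !inE.
apply/negP => /andP [xE yE]; have /andP [] := edge_both xE yE nxy.
by rewrite gxy.
Qed.

End Graph.


Lemma sum_enum_card (U : finType) (P : pred U) :
  (\sum_(c < #|U|) (P (enum_val c) : nat))%N = #|[set w | P w]|.
Proof.
rewrite -sum1_card (reindex (fun c : 'I_#|U| => enum_val c)) /=.
  rewrite [RHS]big_mkcond /=; apply: eq_bigr => c _; rewrite inE; by case: (P _).
apply: onW_bij; exists enum_rank; [exact: enum_valK | exact: enum_rankK].
Qed.

Definition Wt (T : finType) (g : rel T) (k : nat) : finType := (edge_t g * 'I_k)%type.

Lemma entry_sub (F : nzRingType) n (A : 'M[F]_n) c i j :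
  (1%:M - c *: A) i j = (i == j)%:R - c * A i j.
Proof. by rewrite !mxE. Qed.

Lemma mxC (R : rcfType) n (A : 'M[R]_n) :
  (2 : {poly R}) *: ((('X - 1%:P) ^+ 2)%:M - map_mx polyC (1%:M - 2^-1 *: A)) =
  map_mx polyC A - ('X *+ 4 - 'X ^+ 2 *+ 2)%:M.
Proof.
apply/matrixP => i j; rewrite !mxE.
set a := A i j.
have h2 : (2 : {poly R}) * (2^-1)%:P = 1.
  by rewrite -polyC_natr -polyCM divff // pnatr_eq0.
apply/eqP; rewrite -subr_eq0; apply/eqP.
case: (i == j) => /=; rewrite ?(polyCB, polyCM, polyCN, polyCD, polyC1, polyC0, mulr1n, mulr0n).
  transitivity ((2 * (2^-1)%:P - 1) * a%:P); first by ring.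
  by rewrite h2 subrr mul0r.
transitivity ((2 * (2^-1)%:P - 1) * a%:P); first by ring.
by rewrite h2 subrr mul0r.
Qed.

Lemma mxD (R : rcfType) n (A : 'M[R]_n) (f : {poly R}) :
  map_mx polyC A - f%:M = (-1) *: map_mx (comp_poly f) (char_poly_mx A).
Proof.
apply/matrixP => i j; rewrite !mxE rmorphB /= rmorphMn /= comp_polyX comp_polyC.
by case: (i == j) => /=; ring.
Qed.

Section Mat.
Variables (R : rcfType) (T : finType) (g : rel T) (k : nat).
Hypothesis gsym : symmetric g.
Hypothesis girr : irreflexive g.
Hypothesis kp : (0 < k)%N.
Hypothesis dp : forall x, (0 < degree g x)%N.
Local Notation W := (Wt g k).
Local Notation V := (subdiv_vertex g k).
Local Notation S := (subdiv_rel g k).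

Definition dS (v : V) : R := (Num.sqrt (degree S v)%:R)^-1.
Definition Umx : 'M[R]_(#|T|, #|W|) := \matrix_(a, b)
  - (dS (inl (enum_val a)) * (S (inl (enum_val a)) (inr (enum_val b)))%:R * dS (inr (enum_val b))).

Lemma UUt : Umx *m Umx^T = 1%:M - 2^-1 *: norm_laplacian R g.
Proof.
apply/matrixP => a b.
set x := enum_val a; set y := enum_val b.
have dW : forall w, dS (inr w) = (Num.sqrt 2)^-1 by move=> w; rewrite /dS deg_inr.
have i2 : (2:R)^-1 = (Num.sqrt 2)^-1 ^+ 2 by rewrite exprVn sqr_sqrtr // ler0n.
have -> : (Umx *m Umx^T) a b = dS (inl x) * dS (inl y) * 2^-1 *
    (#|[set w : W | S (inl x) (inr w) && S (inl y) (inr w)]|)%:R.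
  rewrite mxE -sum_enum_card natr_sum mulr_sumr; apply: eq_bigr => c _.
  rewrite !mxE !dW i2 -/x -/y.
  case: (S (inl x) _); case: (S (inl y) _) => /=; ring.
rewrite entry_sub nl_entry -/x -/y.
have dSl : forall z, dS (inl z) = (Num.sqrt k%:R)^-1 * (Num.sqrt (degree g z)%:R)^-1.
  move=> z; rewrite /dS deg_inl cardW_inl //.
  have h : ((k * degree g z)%N%:R : R) = k%:R * (degree g z)%:R := natrM _ _ _.
  by rewrite h sqrtrM ?ler0n // invfM.
have sk0 : Num.sqrt (k%:R) != 0 :> R by rewrite sqrtr_eq0 -ltNge ltr0n.
have sd0 : forall t, Num.sqrt (degree g t)%:R != 0 :> R.
  by move=> t; rewrite sqrtr_eq0 -ltNge ltr0n.
have kk : (k%:R : R) = Num.sqrt k%:R ^+ 2 by rewrite sqr_sqrtr ?ler0n.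
have dd t : (degree g t)%:R = Num.sqrt (degree g t)%:R ^+ 2 :> R.
  by rewrite sqr_sqrtr ?ler0n.
rewrite !dSl.
case: (eqVneq a b) => [eab|nab].
  have exy : y = x by rewrite /x /y eab.
  rewrite exy girr.
  have -> : #|[set w : W | S (inl x) (inr w) && S (inl x) (inr w)]| = #|[set w : W | S (inl x) (inr w)]|.
    by apply: eq_card => w; rewrite !inE andbb.
  rewrite cardW_inl // (natrM R).
  move: (sd0 x) (dd x); set sd := Num.sqrt _ => sd0x ddx.
  move: sk0 kk; set sk := Num.sqrt _ => sk0' kk'.
  rewrite {1}kk' ddx /=. field; by rewrite sd0x sk0'.
have nxy : x != y by apply: contra nab => /eqP /enum_val_inj ->.
rewrite cardW_both //; case: (g x y); last by rewrite muln0 /=; ring.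
rewrite muln1 /=.
move: (sd0 x) (sd0 y); set sx := Num.sqrt (degree g x)%:R; set sy := Num.sqrt (degree g y)%:R => sx0 sy0.
move: sk0 kk; set sk := Num.sqrt _ => sk0' kk'.
rewrite {1}kk'; field; by rewrite sx0 sy0 sk0'.
Qed.


Definition fs (u : 'I_#|T| + 'I_#|W|) : V :=
  match u with inl a => inl (enum_val a) | inr b => inr (enum_val b) end.
Definition gs (v : V) : 'I_#|T| + 'I_#|W| :=
  match v with inl x => inl (enum_rank x) | inr w => inr (enum_rank (w : W)) end.
Definition hh (i : 'I_(#|T| + #|W|)) : 'I_#|V| := enum_rank (fs (split i)).

Lemma hh_bij : bijective hh.
Proof.
exists (fun j => unsplit (gs (enum_val j))) => i.
  rewrite /hh enum_rankK.
  have -> : gs (fs (split i)) = split i by case: (split i) => c /=; rewrite enum_valK.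
  exact: splitK.
rewrite /hh unsplitK.
have -> : fs (gs (enum_val i)) = enum_val i by case: (enum_val i) => c /=; rewrite enum_rankK.
exact: enum_valK.
Qed.

Definition Mmx : 'M[R]_(#|T| + #|W|) := \matrix_(i, j) norm_laplacian R S (hh i) (hh j).

Lemma M_block : Mmx = block_mx 1%:M Umx Umx^T 1%:M.
Proof.
apply/matrixP => i j; rewrite -[i]splitK -[j]splitK.
case: (split i) => a; case: (split j) => b; rewrite [LHS]mxE nl_entry /hh !unsplitK /= !enum_rankK (inj_eq enum_rank_inj) /=.
- by rewrite block_mxEul mxE (inj_eq (@inl_inj _ _)) (inj_eq enum_val_inj) mulr0 mul0r subr0.
- rewrite block_mxEur mxE /dS; case: (enum_val b) => E c /=; ring.
- rewrite block_mxEdl !mxE /dS; case: (enum_val a) => E c /=; ring.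
- rewrite block_mxEdr mxE (inj_eq (@inr_inj _ _)) (inj_eq enum_val_inj).
  by case: (enum_val a) => E c /=; rewrite mulr0 mul0r subr0.
Qed.

Definition Up := map_mx (@polyC R) Umx.

Lemma charA : char_poly_mx Mmx =
  block_mx (('X - 1%:P)%:M) (- Up) (- Up^T) (('X - 1%:P)%:M).
Proof.
rewrite M_block; apply/matrixP => i j; rewrite -[i]splitK -[j]splitK.
case: (split i) => a; case: (split j) => b; rewrite !mxE !unsplitK /=.
all: rewrite ?row_mxEl ?row_mxEr !mxE ?eq_shift ?mulr0n ?polyC0 ?sub0r ?subr0 ?raddfN //=.
all: by case: (a == b); rewrite /= ?polyC1 ?polyC0 ?subr0.
Qed.

Lemma char_id : (2 ^+ #|T| * ('X - 1%:P) ^+ #|T|) * char_poly (norm_laplacian R S) =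
  ((-1) ^+ #|T| * ('X - 1%:P) ^+ #|W|) *
  (char_poly (norm_laplacian R g) \Po ('X *+ 4 - 'X ^+ 2 *+ 2)).
Proof.
set Y := 'X - 1%:P.
have e1 : char_poly (norm_laplacian R S) = \det (char_poly_mx Mmx).
  by rewrite -(char_poly_reindex _ hh_bij).
set Q := block_mx (Y%:M) 0 (Up^T) (1%:M : 'M[{poly R}]_#|W|).
have eB : char_poly_mx Mmx *m Q = block_mx ((Y ^+ 2)%:M - Up *m Up^T) (- Up) 0 (Y%:M).
  rewrite charA mulmx_block; congr block_mx.
  - by rewrite -scalar_mxM expr2 mulNmx.
  - by rewrite mulmx0 add0r mulNmx mulmx1.
  - by rewrite mulNmx mul_mx_scalar mul_scalar_mx addNr.
  - by rewrite mulmx0 add0r mulmx1.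
have dQ : \det Q = Y ^+ #|T| by rewrite det_lblock det_scalar det1 mulr1.
have e2 : \det (char_poly_mx Mmx) * Y ^+ #|T| = \det ((Y ^+ 2)%:M - Up *m Up^T) * Y ^+ #|W|.
  by rewrite -dQ -det_mulmx eB det_ublock det_scalar.
have eU : Up *m Up^T = map_mx polyC (1%:M - 2^-1 *: norm_laplacian R g).
  by rewrite /Up map_trmx -map_mxM UUt.
have e3 : 2 ^+ #|T| * \det ((Y ^+ 2)%:M - Up *m Up^T) =
   (-1) ^+ #|T| * (char_poly (norm_laplacian R g) \Po ('X *+ 4 - 'X ^+ 2 *+ 2)).
  by rewrite -detZ eU mxC mxD detZ det_map_mx.
by rewrite e1 -mulrA [Y ^+ #|T| * _]mulrC e2 mulrA e3 mulrAC.
Qed.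
End Mat.



Lemma mup_final (R : rcfType) (cS cG : {poly R}) n p s : s != 1 -> cG != 0 ->
  (2 ^+ n * ('X - 1%:P) ^+ n) * cS =
  ((-1) ^+ n * ('X - 1%:P) ^+ p) * (cG \Po ('X *+ 4 - 'X ^+ 2 *+ 2)) ->
  mup s cS = mup (4 * s - 2 * s ^+ 2) cG.
Proof.
move=> s1 cG0 e.
have := congr1 (mup s) e.
have s10 : s - 1 != 0 by rewrite subr_eq0.
have two0 : (2%:R : R) != 0 by rewrite pnatr_eq0.
rewrite mupMr; last by rewrite /root !hornerE mulf_neq0 // expf_neq0.
rewrite mupMr; last by rewrite /root !hornerE mulf_neq0 // expf_neq0 // oppr_eq0 oner_eq0.
by move=> ->; rewrite mup_comp.
Qed.

Unset Implicit Arguments.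
Theorem lemma3p1 (R : rcfType) (T : finType) (g : rel T) (k : nat)
  (sig : R) :
  simple_graph g -> connected_graph g -> (0 < k)%N ->
  eigenvalue (norm_laplacian R (subdiv_rel g k)) sig -> sig != 1 ->
  eigenvalue (norm_laplacian R g) (4 * sig - 2 * sig ^+ 2) /\
  eig_mult (norm_laplacian R g) (4 * sig - 2 * sig ^+ 2)
  = eig_mult (norm_laplacian R (subdiv_rel g k)) sig.
Proof.
move=> [gsym girr] gconn kp eig s1.
case: (boolP [exists x : T, exists y : T, x != y]) => [/existsP [x0 /existsP [y0 nxy]] | none].
  have dp : forall x, (0 < degree g x)%N.
    move=> x.
    have [z nz] : exists z, x != z.
      by case: (eqVneq x x0) => [->|]; [exists y0 | exists x0].
    have := gconn x z; case/connectP => pth pp lz.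
    case: pth pp lz => [_ /= zx | w pth /= /andP [gxw _] _].
      by rewrite zx eqxx in nz.
    by rewrite card_gt0; apply/set0Pn; exists w; rewrite inE.
  have e := char_id R gsym girr kp dp.
  have m := mup_final s1 (monic_neq0 (char_poly_monic _)) e.
  split; last by rewrite /eig_mult m.
  move: eig; rewrite !eigenvalue_root_char -!dvdp_XsubCl !XsubC_dvd ?monic_neq0 ?char_poly_monic //.
  by rewrite m.
have nn : forall a b : T, a = b.
  move=> a b; apply/eqP/negPn/negP => nab; move/negP: none; apply.
  by apply/existsP; exists a; apply/existsP; exists b.
have S0 : forall u v, subdiv_rel g k u v = false.
  move=> [x|[E i]] [y|[E' j]] //=.
    have [a [b [gab _ _]]] := edge_two girr E'.
    by rewrite (nn a b) girr in gab.
  have [a [b [gab _ _]]] := edge_two girr E.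
  by rewrite (nn a b) girr in gab.
have L1 : norm_laplacian R (subdiv_rel g k) = 1%:M.
  by apply/matrixP => i j; rewrite nl_entry S0 mulr0 mul0r subr0 mxE.
move: eig; rewrite L1 eigenvalue_root_char /char_poly.
have -> : char_poly_mx (1%:M : 'M[R]_#|subdiv_vertex g k|) = ('X - 1%:P)%:M.
  apply/matrixP => i j; rewrite !mxE.
  by case: (i == j); rewrite /= ?polyC1 ?polyC0 ?subr0.
rewrite det_scalar; case: #|_| => [|N].
  by rewrite expr0 /root hornerC oner_eq0.
by rewrite root_exp_XsubC (negbTE s1).
Qed.
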